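(* Let $X_1,\dots,X_n$ be (possibly dependent) component lifetimes identically distributed as $X$, let $\tau(\mathbf X)$ be the lifetime of a coherent system with these components and domination function $h$, i.e. $\bar F_{\tau(\mathbf X)}(x)=h(\bar F_X(x))$, and let $H(p)=ph'(p)/h(p)$, $p\in(0,1)$. For $t\ge0$, let $(\tau(\mathbf X))_t=(\tau(\mathbf X)-t\mid\tau(\mathbf X)>t)$, and let $\tau(\mathbf X_t)$ be the lifetime of the coherent system with the same structure built from the used components $(X_i)_t=(X_i-t\mid X_i>t)$, with reliability $\bar F_{\tau(\mathbf X_t)}(x)=h\big(\bar F_X(t+x)/\bar F_X(t)\big)$. If $(1-p)H'(p)/H(p)$ is decreasing and non-positive in $p\in(0,1)$, then for any fixed $t\ge0$, $\tau(\mathbf X_t)\underset{c}{\prec}(\tau(\mathbf X))_t$.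
   Context: All random variables are non-negative and absolutely continuous with support $[0,\infty)$. For a random variable $W$: density $f_W$, survival $\bar F_W$, hazard rate $r_W=f_W/\bar F_W$. $U\underset{c}{\prec}V$ means $r_U(x)/r_V(x)$ is increasing (non-decreasing) in $x\ge0$. The domination function $h:[0,1]\to[0,1]$ is increasing, continuous, $h(0)=0$, $h(1)=1$, assumed differentiable as needed. ''Decreasing'' means non-increasing; ''negative'' in the paper means non-positive. *)

(* Defs.v *)
From Stdlib Require Import Reals.
From Coquelicot Require Import Coquelicot.
Open Scope R_scope.

Definition hazard (S : R -> R) (x : R) : R := - Derive S x / S x.

Definition c_order (SU SV : R -> R) : Prop :=
  forall x y, 0 < x -> x <= y ->
    hazard SU x / hazard SV x <= hazard SU y / hazard SV y.

Definition residual (S : R -> R) (t : R) : R -> R :=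
  fun x => S (t + x) / S t.

Definition system (h : R -> R) (S : R -> R) : R -> R :=
  fun x => h (S x).

Definition Hfun (h : R -> R) (p : R) : R := p * Derive h p / h p.

(* Main.v *)
Require Import Defs.
From Stdlib Require Import Reals Lra.
From Coquelicot Require Import Coquelicot.
Open Scope R_scope.

Lemma noninc_of_deriv (f df : R -> R) (a b : R) :
  (forall x, a < x < b -> is_derive f x (df x)) ->
  (forall x, a < x < b -> df x <= 0) ->
  forall x y, a < x -> x <= y -> y < b -> f y <= f x.
Proof.
  intros Hd Hs x y ax xy yb.
  destruct (Req_dec x y) as [<-|nxy]; [lra|].
  destruct (MVT_gen f x y df) as [c [Hc Heq]].
  - intros z Hz. rewrite Rmin_left in Hz by lra. rewrite Rmax_right in Hz by lra.
    apply Hd; lra.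
  - intros z Hz. rewrite Rmin_left in Hz by lra. rewrite Rmax_right in Hz by lra.
    assert (Hz' : a < z < b) by lra.
    pose proof (proj1 (is_derive_Reals f z (df z)) (Hd z Hz')) as D.
    apply derivable_continuous_pt. exists (df z). exact D.
  - rewrite Rmin_left in Hc by lra. rewrite Rmax_right in Hc by lra.
    assert (df c <= 0) by (apply Hs; lra).
    assert (df c * (y - x) <= 0).
    { apply Rmult_le_0_r; lra. }
    lra.
Qed.

Lemma deriv_nonneg (h : R -> R) (p l : R) :
  0 < p < 1 ->
  (forall p q, 0 <= p -> p <= q -> q <= 1 -> h p <= h q) ->
  is_derive h p l -> 0 <= l.
Proof.
  intros Hp Hm Hd.
  apply is_derive_Reals in Hd.
  destruct (Rle_or_lt 0 l) as [|Hl]; [assumption|exfalso].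
  destruct (Hd (- l)) as [d Hdl]; [lra|].
  set (e := Rmin (d/2) ((1 - p)/2)).
  assert (He : 0 < e).
  { unfold e. apply Rmin_glb_lt; pose proof (cond_pos d); lra. }
  assert (He1 : e <= d/2) by apply Rmin_l.
  assert (He2 : e <= (1-p)/2) by apply Rmin_r.
  assert (Hq : 0 <= (h (p + e) - h p) / e).
  { apply Rdiv_le_0_compat; [|lra].
    assert (h p <= h (p+e)) by (apply Hm; lra). lra. }
  assert (Habs : Rabs e < d).
  { rewrite Rabs_pos_eq by lra. pose proof (cond_pos d); lra. }
  specialize (Hdl e ltac:(lra) Habs).
  apply Rabs_def2 in Hdl. lra.
Qed.

Lemma alg (A B a b c p : R) :
  0 < A -> 0 < B -> 0 < p < c -> c <= 1 ->
  (1 - p / c) * a / A <= (1 - p) * b / B ->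
  (1 - p) * b / B <= 0 ->
  a / c * B - A * b <= 0.
Proof.
  intros HA HB Hp Hc H1 H2.
  set (k1 := (1 - p / c) * a / A) in *.
  set (k2 := (1 - p) * b / B) in *.
  assert (Ea : a = k1 * A * c / (c - p)).
  { unfold k1. field. repeat split; lra. }
  assert (Eb : b = k2 * B / (1 - p)).
  { unfold k2. field. split; lra. }
  assert (E : a / c * B - A * b = A * B * (k1 / (c - p) - k2 / (1 - p))).
  { rewrite Ea, Eb. field. repeat split; lra. }
  rewrite E.
  assert (k1 / (c - p) <= k2 / (c - p)).
  { unfold Rdiv. apply Rmult_le_compat_r; [apply Rlt_le, Rinv_0_lt_compat; lra|lra]. }
  assert (k2 / (c - p) <= k2 / (1 - p)).
  { unfold Rdiv. assert (/ (1 - p) <= / (c - p)) by (apply Rinv_le_contravar; lra).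
    nra. }
  assert (0 < A * B) by (apply Rmult_lt_0_compat; lra).
  apply Rmult_le_0_l; lra.
Qed.

Theorem proposition5p1 (Fbar h : R -> R) (t : R) :
  (* X : non-negative, absolutely continuous, support [0, oo) *)
  (forall x, x <= 0 -> Fbar x = 1) ->
  (forall x, 0 < x -> 0 < Fbar x < 1) ->
  (forall x y, x <= y -> Fbar y <= Fbar x) ->
  (forall x, continuous Fbar x) ->
  is_lim Fbar p_infty 0 ->
  (forall x, 0 < x -> ex_derive Fbar x) ->
  (forall x, 0 < x -> Derive Fbar x < 0) ->
  (* domination function h *)
  h 0 = 0 -> h 1 = 1 ->
  (forall p q, 0 <= p -> p <= q -> q <= 1 -> h p <= h q) ->
  (forall p, 0 <= p <= 1 -> continuity_pt h p) ->
  (forall p, 0 < p < 1 -> ex_derive h p) ->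
  (forall p, 0 < p < 1 -> ex_derive (Derive h) p) ->
  (* H(p) is well defined and non-zero, so that (1-p)H'(p)/H(p) makes sense *)
  (forall p, 0 < p < 1 -> Hfun h p <> 0) ->
  (* (1-p) H'(p) / H(p) is decreasing and non-positive on (0,1) *)
  (forall p q, 0 < p -> p <= q -> q < 1 ->
     (1 - q) * Derive (Hfun h) q / Hfun h q <= (1 - p) * Derive (Hfun h) p / Hfun h p) ->
  (forall p, 0 < p < 1 -> (1 - p) * Derive (Hfun h) p / Hfun h p <= 0) ->
  0 <= t ->
  c_order (system h (residual Fbar t)) (residual (system h Fbar) t).
Proof.
  intros F0 F01 Fmon Fcont Flim Fex Fneg h0 h1 hmon hcont hex hex2 Hnz Kdec Kneg ht.
  assert (hnz : forall p, 0 < p < 1 -> h p <> 0).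
  { intros p Hp E. apply (Hnz p Hp). unfold Hfun. rewrite E. unfold Rdiv. rewrite Rinv_0. ring. }
  assert (Dhnz : forall p, 0 < p < 1 -> Derive h p <> 0).
  { intros p Hp E. apply (Hnz p Hp). unfold Hfun. rewrite E. unfold Rdiv. ring. }
  assert (hpos : forall p, 0 < p <= 1 -> 0 < h p).
  { intros p Hp. destruct (Req_dec p 1) as [->|n]; [lra|].
    assert (0 <= h p) by (rewrite <- h0; apply hmon; lra).
    assert (h p <> 0) by (apply hnz; lra). lra. }
  assert (Dhnn : forall p, 0 < p < 1 -> 0 <= Derive h p).
  { intros p Hp. apply (deriv_nonneg h p); auto. apply Derive_correct; auto. }
  assert (Hpos : forall p, 0 < p < 1 -> 0 < Hfun h p).
  { intros p Hp. assert (0 <= Hfun h p).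
    { unfold Hfun. apply Rdiv_le_0_compat; [|apply hpos; lra].
      apply Rmult_le_pos; [lra|auto]. }
    pose proof (Hnz p Hp). lra. }
  assert (exH : forall p, 0 < p < 1 -> ex_derive (Hfun h) p).
  { intros p Hp. unfold Hfun. auto_derive. repeat split; auto. }
  set (c := Fbar t).
  assert (Hc : 0 < c <= 1).
  { unfold c. destruct (Req_dec t 0) as [->|n].
    - rewrite F0 by lra. lra.
    - pose proof (F01 t ltac:(lra)). lra. }
  assert (Fstrict : forall a b, 0 < a -> a < b -> Fbar b < Fbar a).
  { intros a b Ha Hab.
    destruct (MVT_gen Fbar a b (Derive Fbar)) as [z [Hz Heq]].
    - intros z Hz. rewrite Rmin_left in Hz by lra. rewrite Rmax_right in Hz by lra.
      apply Derive_correct, Fex; lra.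
    - intros z Hz. rewrite Rmin_left in Hz by lra. rewrite Rmax_right in Hz by lra.
      apply derivable_continuous_pt. exists (Derive Fbar z).
      apply is_derive_Reals, Derive_correct, Fex; lra.
    - rewrite Rmin_left in Hz by lra. rewrite Rmax_right in Hz by lra.
      assert (Derive Fbar z < 0) by (apply Fneg; lra).
      assert (Derive Fbar z * (b - a) < 0).
      { apply Rmult_neg_pos; lra. }
      lra. }
  assert (Hp : forall z, 0 < z -> 0 < Fbar (t + z) < c).
  { intros z Hz. split; [apply F01; lra|].
    assert (Fbar (t + z) < Fbar (t + z / 2)) by (apply Fstrict; lra).
    assert (Fbar (t + z / 2) <= c) by (apply Fmon; lra). lra. }
  set (Q := fun p => Hfun h (p / c) / Hfun h p).
  assert (Qmon : forall p q, 0 < p -> p <= q -> q < c -> Q q <= Q p).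
  { apply (noninc_of_deriv Q
      (fun p => (Derive (Hfun h) (p / c) / c * Hfun h p - Hfun h (p / c) * Derive (Hfun h) p)
                / (Hfun h p)^2) 0 c).
    - intros p [H0 H1].
      assert (p / c < 1).
      { apply (Rmult_lt_reg_r c); [lra|]. unfold Rdiv. rewrite Rmult_assoc, Rinv_l by lra. lra. }
      assert (0 < p / c) by (apply Rdiv_lt_0_compat; lra).
      unfold Q. auto_derive.
      + repeat split; try (apply exH; lra). apply Hnz; lra.
      + change (fun x : R => Hfun h x) with (Hfun h).
        unfold Rdiv. field. split; [apply Hnz; lra| lra].
    - intros p [H0 H1].
      assert (p / c < 1).
      { apply (Rmult_lt_reg_r c); [lra|]. unfold Rdiv. rewrite Rmult_assoc, Rinv_l by lra. lra. }
      assert (0 < p / c) by (apply Rdiv_lt_0_compat; lra).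
      assert (p <= p / c).
      { apply (Rmult_le_reg_r c); [lra|]. unfold Rdiv. rewrite Rmult_assoc, Rinv_l by lra. nra. }
      unfold Rdiv at 1. apply Rmult_le_0_r.
      + apply (alg _ _ _ _ c p); try lra; try (apply Hpos; lra).
        * apply Kdec; lra.
        * apply Kneg; lra.
      + apply Rlt_le, Rinv_0_lt_compat, pow_lt, Hpos; lra. }
  unfold c_order. intros x y Hx Hxy.
  assert (Rat : forall z, 0 < z ->
     hazard (system h (residual Fbar t)) z / hazard (residual (system h Fbar) t) z
     = Q (Fbar (t + z))).
  { intros z Hz.
    destruct (Hp z Hz) as [Hp0 Hp1].
    set (p := Fbar (t + z)) in *.
    assert (Hu1 : p / c < 1).
    { apply (Rmult_lt_reg_r c); [lra|]. unfold Rdiv. rewrite Rmult_assoc, Rinv_l by lra. lra. }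
    assert (Hu0 : 0 < p / c) by (apply Rdiv_lt_0_compat; lra).
    assert (Hhc : 0 < h c) by (apply hpos; lra).
    assert (HdF : Derive Fbar (t + z) < 0) by (apply Fneg; lra).
    assert (exF : ex_derive Fbar (t + z)) by (apply Fex; lra).
    unfold hazard, system, residual. fold c.
    assert (D1 : Derive (fun x => h (Fbar (t + x) / c)) z = Derive h (p / c) * (Derive Fbar (t + z) / c)).
    { apply is_derive_unique. auto_derive.
      - repeat split; try exact exF; try (apply (hex (p / c)); lra); try (apply (hex p); lra).
      - change (fun x : R => Fbar x) with Fbar. change (fun x : R => h x) with h.
        unfold p, Rdiv. ring. }
    assert (D2 : Derive (fun x => h (Fbar (t + x)) / h c) z = Derive h p * Derive Fbar (t + z) / h c).
    { apply is_derive_unique. auto_derive.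
      - repeat split; try exact exF; try (apply (hex (p / c)); lra); try (apply (hex p); lra); lra.
      - change (fun x : R => Fbar x) with Fbar. change (fun x : R => h x) with h.
        unfold p, Rdiv. ring. }
    rewrite D1, D2. fold p. unfold Q, Hfun.
    assert (h (p / c) <> 0) by (apply hnz; lra).
    assert (h p <> 0) by (apply hnz; lra).
    assert (Derive h p <> 0) by (apply Dhnz; lra).
    assert (Derive h (p / c) <> 0) by (apply Dhnz; lra).
    field. repeat split; lra. }
  rewrite !Rat by lra. apply Qmon; try (apply Hp; lra).
  apply Fmon; lra.
Qed.
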